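(* Let $m \ge 1$ and $n_c \ge 5$ be integers, let $\mathcal G_m^{n_c}=(\mathcal V,\mathcal E)$ be the 1D honeycomb network defined in the context, and let $c>0$. Consider the Kuramoto model $$\dot\theta_i=\omega_i+\sum_{j=1}^n a_{ij}\sin(\theta_j-\theta_i),\qquad i\in\mathcal V,$$ with $a_{ij}=a_{ji}=c$ for every edge $(i,j)\in\mathcal E$, $a_{ij}=0$ otherwise, and identical natural frequencies $\omega_i=\omega_j$ for all $i,j\in\mathcal V$. Consider the phase configurations $\theta=(\theta_1,\dots,\theta_n)\in(\mathbb R/2\pi\mathbb Z)^n$ satisfying: (C1) for every edge $(i,j)\in\mathcal E$ there is $k\in\mathbb Z$ with $|k|\le \lceil n_c/4\rceil-1$ and $\theta_i-\theta_j\equiv \frac{2\pi k}{n_c}\pmod{2\pi}$; and (C2) for every $p\in\{0,\dots,m-1\}$ and all $i,j\in\{p(n_c-1)+1,\dots,(p+1)(n_c-1)\}$, $\theta_i-\theta_{i+1}\equiv\theta_j-\theta_{j+1}\pmod{2\pi}$. Then, modulo a common rotation of all phases, there are exactly $(2\lceil n_c/4\rceil-1)^m$ configurations satisfying (C1) and (C2); each of them is a phase-locked configuration of the model, and each is locally exponentially stable (modulo the one-dimensional rotational symmetry, i.e. the Jacobian at the configuration has a simple zero eigenvalue in the direction $(1,\dots,1)$ and all other eigenvalues negative).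
   Context: The 1D honeycomb network $\mathcal G_m^{n_c}$ with $m$ cycles of $n_c$ nodes each is the undirected graph with vertex set $\mathcal V=\{1,2,\dots,m(n_c-1)+1\}$ (so $n=m(n_c-1)+1$) and edge set $\mathcal E=\mathcal E_1\cup\mathcal E_2$, where $\mathcal E_1=\{(i,i+1): 1\le i\le m(n_c-1)\}$ and $\mathcal E_2=\{(i,i+n_c-1): i=p(n_c-1)+1,\ p=0,1,\dots,m-1\}$. Thus for each $p$ the nodes $p(n_c-1)+1,\dots,(p+1)(n_c-1)+1$ form a cycle of length $n_c$, and consecutive cycles share exactly one node and no edge. A phase-locked configuration is a solution in which all phase velocities $\dot\theta_i$ are equal for all times; equivalently, in the frame rotating at the common natural frequency, it is an equilibrium of the dynamics. $\lceil\cdot\rceil$ denotes the ceiling function. *)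

(* Defs.v *)
From HB Require Import structures.
From mathcomp Require Import all_boot all_order all_algebra.
From mathcomp Require Import reals trigo.
Unset Printing Implicit Defensive.
Import Order.TTheory GRing.Theory Num.Theory.
Local Open Scope ring_scope.

(* Vertices of G_m^{nc} are 'I_(m*(nc-1)).+1, i.e. the paper's vertex i
   (1-based) is the ordinal i-1.  *)

(* number of vertices minus one: n = hcN nc m + 1 = m(nc-1)+1 *)
Definition hcN (nc m : nat) : nat := (m * (nc - 1))%N.

(* Directed edge list (i,j) of the paper, 0-based:
   E1 : (k, k+1) for k < m(nc-1);
   E2 : (p(nc-1), p(nc-1)+nc-1) for p < m. *)
Definition hc_edge (nc m i j : nat) : bool :=
  ((j == i.+1) && (i < m * (nc - 1)))%N
  || [&& j == i + (nc - 1), i %% (nc - 1) == 0 & i < m * (nc - 1)]%N.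

Definition hc_adj (nc m i j : nat) : bool := hc_edge nc m i j || hc_edge nc m j i.

Definition ceil4 (nc : nat) : nat := ((nc + 3) %/ 4)%N.

Section Kuramoto.
Context {R : realType}.

Definition eqmod2pi (x y : R) : Prop := exists k : int, x - y = (2 * pi) * k%:~R.

Definition rot_equiv {N : nat} (th th' : 'I_N -> R) : Prop :=
  exists r : R, forall i, eqmod2pi (th i) (th' i + r).

Definition coupling (nc m : nat) (c : R) (i j : 'I_((hcN nc m).+1)) : R :=
  if hc_adj nc m i j then c else 0.

Definition kuramoto_rhs (nc m : nat) (c : R) (w th : 'I_((hcN nc m).+1) -> R)
  (i : 'I_((hcN nc m).+1)) : R :=
  w i + \sum_j coupling nc m c i j * sin (th j - th i).

Definition phase_locked (nc m : nat) (c : R) (w th : 'I_((hcN nc m).+1) -> R) : Prop :=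
  exists Om : R, forall i, kuramoto_rhs nc m c w th i = Om.

Definition kuramoto_jac (nc m : nat) (c : R) (th : 'I_((hcN nc m).+1) -> R)
  : 'M[R]_((hcN nc m).+1) :=
  \matrix_(i, j) if i == j then - \sum_k coupling nc m c i k * cos (th k - th i)
                 else coupling nc m c i j * cos (th j - th i).

Definition stable_mod_rot (nc m : nat) (c : R) (th : 'I_((hcN nc m).+1) -> R) : Prop :=
  let J := kuramoto_jac nc m c th in
  [/\ (const_mx 1 : 'rV[R]_((hcN nc m).+1)) *m J = 0,
      mup 0 (char_poly J) = 1%N
    & forall a : R, eigenvalue J a -> a != 0 -> a < 0].

Definition C1 (nc m : nat) (th : 'I_((hcN nc m).+1) -> R) : Prop :=
  forall i j : 'I_((hcN nc m).+1), hc_edge nc m i j ->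
    exists k : int, (absz k <= ceil4 nc - 1)%N /\
      eqmod2pi (th i - th j) (2 * pi * k%:~R / nc%:R).

Definition C2 (nc m : nat) (th : 'I_((hcN nc m).+1) -> R) : Prop :=
  forall p i j : nat, (p < m)%N ->
    (p * (nc - 1) <= i < p.+1 * (nc - 1))%N ->
    (p * (nc - 1) <= j < p.+1 * (nc - 1))%N ->
    eqmod2pi (th (inord i) - th (inord i.+1)) (th (inord j) - th (inord j.+1)).

End Kuramoto.

(* Main.v *)
Require Import Defs.
From HB Require Import structures.
From mathcomp Require Import all_boot all_order all_algebra.
From mathcomp Require Import reals trigo.
From mathcomp Require Import zify ring lra.
Import Order.TTheory GRing.Theory Num.Theory.
Local Open Scope ring_scope.

Set Implicit Arguments.

Section Lap.
Variable R : realFieldType.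
Variable n : nat.
Variable W : 'I_n.+1 -> 'I_n.+1 -> R.
Hypothesis Wii : forall i, W i i = 0.
Hypothesis Wsym : forall i j, W i j = W j i.
Hypothesis Wge0 : forall i j, 0 <= W i j.
Hypothesis Wpath : forall k : nat, (k < n)%N -> 0 < W (inord k) (inord k.+1).

Definition lapJ : 'M[R]_n.+1 :=
  \matrix_(i, j) if i == j then - \sum_k W i k else W i j.

Lemma lapJ_col (x : 'cV[R]_n.+1) i :
  (lapJ *m x) i 0 = \sum_j W i j * (x j 0 - x i 0).
Proof.
rewrite /lapJ mxE (bigD1 i) //= mxE eqxx.
set S := \sum_k W i k.
have -> : \sum_(j < n.+1 | j != i) (\matrix_(i0, j0) (if i0 == j0 then - \sum_k W i0 k else W i0 j0)) i j * x j 0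
   = \sum_(j < n.+1 | j != i) W i j * x j 0.
  by apply: eq_bigr => j ji; rewrite mxE eq_sym (negbTE ji).
rewrite [RHS](bigD1 i) //= Wii mul0r add0r.
under [X in _ = X]eq_bigr do rewrite mulrBr.
rewrite sumrB -mulr_suml /S (bigD1 i) //= Wii add0r.
by rewrite mulNr addrC.
Qed.

Lemma lapJ_tr : lapJ^T = lapJ.
Proof.
apply/matrixP => i j; rewrite !mxE eq_sym.
case: eqP => [->|_] //.
Qed.

Lemma ex_max (f : 'I_n.+1 -> R) : exists i0, forall j, f j <= f i0.
Proof.
case: (@arg_maxP _ _ _ ord0 xpredT f isT) => i0 _ H.
by exists i0 => j; apply: H.
Qed.

Lemma max_prop (x : 'cV[R]_n.+1) i :
  (lapJ *m x) i 0 = 0 -> (forall j, x j 0 <= x i 0) ->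
  forall j, 0 < W i j -> x j 0 = x i 0.
Proof.
rewrite lapJ_col => H0 Hm j Wp.
have H1 : \sum_(j0 | xpredT j0) (W i j0 * (x i 0 - x j0 0)) = 0.
  transitivity (- \sum_j W i j * (x j 0 - x i 0)); last by rewrite H0 oppr0.
  rewrite -sumrN; apply: eq_bigr => k _.
  by rewrite -mulrN opprB.
have H2 : forall k, xpredT k -> 0 <= W i k * (x i 0 - x k 0).
  by move=> k _; apply: mulr_ge0 => //; rewrite subr_ge0.
move: (psumr_eq0P H2 H1) => /(_ j isT) /eqP.
rewrite mulf_eq0 (gt_eqF Wp) /= subr_eq0 => /eqP ->//.
Qed.

Lemma lapJ_ker (x : 'cV[R]_n.+1) : lapJ *m x = 0 -> forall i, x i 0 = x ord0 0.
Proof.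
move=> H.
have H0 : forall i, (lapJ *m x) i 0 = 0 by move=> i; rewrite H mxE.
have [i0 Hi0] := ex_max (fun j => x j 0).
have Hmax : forall k : 'I_n.+1, x k 0 = x i0 0 -> forall j, x j 0 <= x k 0.
  by move=> k -> j; apply: Hi0.
have up : forall d, (i0 + d <= n)%N -> x (inord (i0 + d)) 0 = x i0 0.
  elim=> [|d IH] Hd; first by rewrite addn0 inord_val.
  have Hd' : (i0 + d <= n)%N by lia.
  have IH' := IH Hd'.
  rewrite addnS.
  have := @max_prop x _ (H0 _) (Hmax _ IH') _ (@Wpath (i0 + d)%N _).
  by rewrite IH'; apply; rewrite -addnS.
have down : forall d, (d <= i0)%N -> x (inord (i0 - d)) 0 = x i0 0.
  elim=> [|d IH] Hd; first by rewrite subn0 inord_val.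
  have IH' := IH (ltnW Hd).
  have Hk : (i0 - d.+1 < n)%N.
    by have := ltn_ord i0; lia.
  have Hw := @Wpath _ Hk.
  rewrite Wsym in Hw.
  have E : (i0 - d = (i0 - d.+1).+1)%N by lia.
  rewrite E in IH'.
  by have := @max_prop x _ (H0 _) (Hmax _ IH') _ Hw; rewrite IH'.
have all : forall i, x i 0 = x i0 0.
  move=> i; case: (leqP i0 i) => Hi.
    have Hle : (i0 + (i - i0) <= n)%N by rewrite subnKC // -ltnS.
    by move: (up _ Hle); rewrite subnKC // inord_val.
  have Hle : (i0 - i <= i0)%N by exact: leq_subr.
  by move: (down _ Hle); rewrite (subKn (ltnW Hi)) inord_val.
by move=> i; rewrite (all i) (all ord0).
Qed.
Lemma lapJ_row (v : 'rV[R]_n.+1) j :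
  (v *m lapJ) 0 j = \sum_i W j i * (v 0 i - v 0 j).
Proof.
have -> : (v *m lapJ) 0 j = (v *m lapJ)^T j 0 by rewrite [RHS]mxE.
rewrite trmx_mul lapJ_tr lapJ_col; apply: eq_bigr => i _.
by rewrite !mxE.
Qed.

Lemma lapJ_sum0 : (const_mx 1 : 'rV[R]_n.+1) *m lapJ = 0.
Proof.
apply/rowP => j; rewrite lapJ_row [RHS]mxE big1 // => i _.
by rewrite !mxE subrr mulr0.
Qed.

Lemma lapJ_eig a : eigenvalue lapJ a -> a != 0 -> a < 0.
Proof.
move=> /eigenvalueP [v Hv vn0] an0.
have Hj : forall j, \sum_i W j i * (v 0 i - v 0 j) = a * v 0 j.
  by move=> j; rewrite -lapJ_row Hv mxE.
have [j1 Hj1] : exists j, v 0 j != 0.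
  case: (pickP (fun j => v 0 j != 0)) => [j Hj'|H]; first by exists j.
  move/negP: vn0; case; apply/eqP/rowP => k; rewrite mxE.
  by move: (H k) => /negbFE/eqP.
have [i0 Hi0] := ex_max (fun j => `|v 0 j|).
have M0 : 0 < `|v 0 i0| by apply: lt_le_trans (Hi0 j1); rewrite normr_gt0.
rewrite lt_neqAle an0 /=.
case: (lerP 0 (v 0 i0)) => Hs.
  have Hle : a * v 0 i0 <= 0.
    rewrite -Hj; apply: sumr_le0 => i _; apply: mulr_ge0_le0 => //.
    rewrite subr_le0; apply: (le_trans (ler_norm _)).
    by rewrite -[X in _ <= X](ger0_norm Hs); apply: Hi0.
  have Hp : 0 < v 0 i0 by rewrite -(ger0_norm Hs).
  nra.
have Hge : 0 <= a * v 0 i0.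
  rewrite -Hj; apply: sumr_ge0 => i _; apply: mulr_ge0 => //.
  rewrite subr_ge0 -lerN2; apply: (le_trans (ler_norm _)).
  by rewrite normrN -(ltr0_norm Hs); apply: Hi0.
nra.
Qed.
Definition Pm : 'M[R]_n.+1 := \matrix_(i, j) if i == ord0 then 1 else (i == j)%:R.
Definition Qm : 'M[R]_n.+1 :=
  \matrix_(i, j) if (i == ord0) && (j != ord0) then -1 else (i == j)%:R.

Lemma PQ1 : Pm *m Qm = 1%:M.
Proof.
apply/matrixP => i j; rewrite !mxE.
have [-> | i0] := eqVneq i ord0.
  under eq_bigr do rewrite mxE eqxx mul1r.
  rewrite (bigD1 ord0) //= mxE eqxx /=.
  have [-> | j0] := eqVneq j ord0.
    by rewrite big1 ?addr0 // => k k0; rewrite mxE (negbTE k0).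
  rewrite (bigD1 j) //= mxE (negbTE j0) eqxx big1 ?addr0 ?addNr ?eq_sym ?(negbTE j0) //.
  by move=> k /andP [k0 kj]; rewrite mxE (negbTE k0) (negbTE kj).
rewrite (bigD1 i) //= !mxE (negbTE i0) eqxx mul1r /= big1 ?addr0 //.
by move=> k ki; rewrite mxE (negbTE i0) [i == k]eq_sym (negbTE ki) mul0r.
Qed.

Lemma Qm_y (y : 'cV[R]_n.+1) i : i != ord0 -> (Qm *m y) i 0 = y i 0.
Proof.
move=> i0; rewrite mxE (bigD1 i) //= mxE (negbTE i0) eqxx mul1r big1 ?addr0 //.
by move=> k ki; rewrite mxE (negbTE i0) [i == k]eq_sym (negbTE ki) mul0r.
Qed.

Lemma Qm_y0 (y : 'cV[R]_n.+1) : (Qm *m y) ord0 0 = y ord0 0 - \sum_(k | k != ord0) y k 0.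
Proof.
rewrite mxE (bigD1 ord0) //= mxE eqxx /= mul1r -sumrN.
congr (_ + _); apply: eq_bigr => k k0; rewrite mxE eqxx (negbTE k0) /=.
by rewrite mulN1r.
Qed.

Lemma lapJ_mup : mup 0 (char_poly lapJ) = 1%N.
Proof.
pose K := Pm *m lapJ *m Qm.
have K0 : forall j, K ord0 j = 0.
  move=> j; rewrite mxE big1 // => k _.
  have -> : (Pm *m lapJ) ord0 k = ((const_mx 1 : 'rV[R]_n.+1) *m lapJ) 0 k.
    by rewrite !mxE; apply: eq_bigr => l _; rewrite !mxE eqxx.
  by rewrite lapJ_sum0 !mxE mul0r.
have cpK : char_poly K = char_poly lapJ.
  rewrite /char_poly /char_poly_mx /K.
  have -> : 'X%:M - map_mx polyC (Pm *m lapJ *m Qm) = map_mx polyC Pm *m ('X%:M - map_mx polyC lapJ) *m map_mx polyC Qm :> 'M[{poly R}]_n.+1.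
    rewrite mulmxBr mulmxBl !map_mxM; congr (_ - _).
    by rewrite scalar_mxC -mulmxA -map_mxM PQ1 map_mx1 mulmx1.
  rewrite !det_mulmx mulrC mulrA -det_mulmx -map_mxM (mulmx1C PQ1) map_mx1 det1.
  by rewrite mul1r.
pose K' := row' ord0 (col' ord0 K).
have cK0 : forall j, char_poly_mx K ord0 j = 'X *+ (ord0 == j).
  move=> j; transitivity ('X *+ (ord0 == j) - (K ord0 j)%:P).
    by rewrite /char_poly_mx !mxE.
  by rewrite K0 subr0.
have cpK' : char_poly K = 'X * char_poly K'.
  rewrite /char_poly (expand_det_row _ ord0) (bigD1 ord0) //= big1 ?addr0.
    rewrite /cofactor /= expr0 mul1r row'_col'_char_poly_mx.
    by rewrite cK0 eqxx mulr1n.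
  move=> j j0; rewrite cK0 eq_sym (negbTE j0).
  by rewrite mulr0n mul0r.
have dK' : \det K' != 0.
  rewrite -det_tr; apply/negP => /det0P [v vn0 Hv].
  pose y : 'cV[R]_n.+1 := \col_i (if unlift ord0 i is Some i' then v 0 i' else 0).
  have y0 : y ord0 0 = 0 by rewrite /y mxE unlift_none.
  have yl : forall j, y (lift ord0 j) 0 = v 0 j by move=> j; rewrite /y mxE liftK.
  have Ky : K *m y = 0.
    apply/colP => i; rewrite [RHS]mxE.
    case: (unliftP ord0 i) => [i'|] ->.
      rewrite mxE big_ord_recl y0 mulr0 add0r.
      transitivity ((v *m K'^T) 0 i'); last by rewrite Hv mxE.
      rewrite [RHS]mxE; apply: eq_bigr => j _.
      by rewrite yl /K' !mxE mulrC.
    by rewrite mxE big1 // => j _; rewrite K0 mul0r.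
  have JQy : lapJ *m (Qm *m y) = 0.
    have H1 : Pm *m (lapJ *m (Qm *m y)) = 0 by rewrite !mulmxA -/K Ky.
    by rewrite -[LHS]mul1mx -(mulmx1C PQ1) -mulmxA H1 mulmx0.
  have Hc := lapJ_ker JQy.
  have Hv' : forall i', v 0 i' = (Qm *m y) ord0 0.
    move=> i'; rewrite -(Hc (lift ord0 i')) Qm_y ?yl //.
  have Hs : \sum_(k | k != ord0) y k 0 = \sum_(i' < n) v 0 i'.
    rewrite big_mkcond big_ord_recl /= add0r.
    by apply: eq_bigr => j _; rewrite yl.
  have E := Qm_y0 y.
  rewrite Hs y0 add0r in E.
  rewrite (eq_bigr (fun _ => (Qm *m y) ord0 0) (fun i _ => Hv' i)) in E.
  move: E Hv'; move: ((Qm *m y) ord0 0) => t ht Hv'.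
  have t0 : t = 0.
    rewrite sumr_const card_ord in ht.
    have : (n.+1)%:R * t = 0 by rewrite mulr_natl mulrS {1}ht addNr.
    by move/eqP; rewrite mulf_eq0 pnatr_eq0 /= => /eqP.
  move/negP: vn0; case; apply/eqP/rowP => i'; rewrite Hv' t0 mxE //.
have m1 : mup 0 ('X : {poly R}) = 1%N.
  by have := mup_XsubCX 1 (0 : R) 0; rewrite eqxx subr0 expr1.
have m0 : mup 0 (char_poly K') = 0%N.
  apply: mupNroot.
  rewrite /root horner_coef0 char_poly_det mulf_eq0 negb_or dK' andbT.
  by rewrite expf_eq0 oppr_eq0 oner_eq0 andbF.
by rewrite -cpK cpK' mupM ?mulf_neq0 ?polyX_eq0 ?monic_neq0 ?char_poly_monic // m1 m0.
Qed.
End Lap.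


Set Implicit Arguments.

Section Trig.
Variable R : realType.

Lemma twopi_nat (n : nat) : 2 * pi * n%:R = (pi *+ 2) *+ n :> R.
Proof. by rewrite mulr_natr mulr_natl. Qed.

Lemma sin_addz (x : R) (k : int) : sin (x + 2 * pi * k%:~R) = sin x.
Proof.
case: k => n.
  by rewrite -[(Posz n)%:~R]/(n%:R) twopi_nat (periodicn (@sinD2pi R)).
rewrite NegzE mulrNz mulrN -[(Posz n.+1)%:~R]/(n.+1%:R) twopi_nat.
by rewrite -{2}[x](subrK ((pi *+ 2) *+ n.+1)) (periodicn (@sinD2pi R)).
Qed.

Lemma cos_addz (x : R) (k : int) : cos (x + 2 * pi * k%:~R) = cos x.
Proof.
case: k => n.
  by rewrite -[(Posz n)%:~R]/(n%:R) twopi_nat (periodicn (@cosD2pi R)).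
rewrite NegzE mulrNz mulrN -[(Posz n.+1)%:~R]/(n.+1%:R) twopi_nat.
by rewrite -{2}[x](subrK ((pi *+ 2) *+ n.+1)) (periodicn (@cosD2pi R)).
Qed.

Lemma eqmod_sin (x y : R) : eqmod2pi x y -> sin x = sin y.
Proof. by case=> k /eqP; rewrite subr_eq => /eqP ->; rewrite addrC sin_addz. Qed.

Lemma eqmod_cos (x y : R) : eqmod2pi x y -> cos x = cos y.
Proof. by case=> k /eqP; rewrite subr_eq => /eqP ->; rewrite addrC cos_addz. Qed.

Lemma eqmod_refl (x : R) : eqmod2pi x x.
Proof. by exists 0; rewrite subrr mulr0. Qed.

Lemma eqmod_sym (x y : R) : eqmod2pi x y -> eqmod2pi y x.
Proof. by case=> k h; exists (- k); rewrite mulrNz mulrN -h opprB. Qed.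

Lemma eqmod_trans (x y z : R) : eqmod2pi x y -> eqmod2pi y z -> eqmod2pi x z.
Proof.
case=> k h [l h']; exists (k + l); rewrite intrD mulrDr -h -h'.
by rewrite addrA subrK.
Qed.

Lemma eqmod_add (a b c e : R) : eqmod2pi a b -> eqmod2pi c e -> eqmod2pi (a + c) (b + e).
Proof.
case=> k h [l h']; exists (k + l); rewrite intrD mulrDr -h -h'.
by rewrite opprD addrACA.
Qed.

Lemma eqmod_opp (a b : R) : eqmod2pi a b -> eqmod2pi (- a) (- b).
Proof. by case=> k h; exists (- k); rewrite mulrNz mulrN -h opprB opprK addrC. Qed.

Lemma eqmod_sub (a b c e : R) : eqmod2pi a b -> eqmod2pi c e -> eqmod2pi (a - c) (b - e).
Proof. by move=> h1 h2; apply: eqmod_add => //; apply: eqmod_opp. Qed.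

Lemma eqmod_2pik (x : R) (k : int) : eqmod2pi (x + 2 * pi * k%:~R) x.
Proof. by exists k; rewrite addrC addKr. Qed.

Lemma cos_pos (nc : nat) (k : int) : (5 <= nc)%N -> (absz k <= ceil4 nc - 1)%N ->
  0 < cos (2 * pi * k%:~R / nc%:R : R).
Proof.
move=> Hnc Hk; apply: cos_gt0_pihalf.
have h4 : (4 * absz k < nc)%N by rewrite /ceil4 in Hk; lia.
have hnc : (0 : R) < nc%:R by rewrite ltr0n; lia.
have hpi : (0 : R) < pi := @pi_gt0 R.
have hk : `|(k%:~R : R)| * 4 < nc%:R.
  rewrite -intr_norm -[`|k|]/((absz k)%:Z) -[(absz k)%:Z%:~R]/((absz k)%:R).
  by rewrite -natrM ltr_nat mulnC.
set x := (k%:~R : R) in hk *.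
have hx1 : x * 4 < nc%:R by apply: le_lt_trans hk; rewrite ler_pM2r // ler_norm.
have hx2 : - (x * 4) < nc%:R by apply: le_lt_trans hk; rewrite -mulNr ler_pM2r // -normrN ler_norm.
have E : 2 * pi * x / nc%:R = (pi / 2) * (x * 4 / nc%:R).
  by field; rewrite gt_eqF.
rewrite E.
have h1 : x * 4 / nc%:R < 1 by rewrite ltr_pdivrMr // mul1r.
have h2 : - 1 < x * 4 / nc%:R.
  by rewrite ltrNl -mulNr ltr_pdivrMr // mul1r.
have hp2 : (0 : R) < pi / 2 by apply: divr_gt0.
apply/andP; split; nra.
Qed.

End Trig.


Unset Implicit Arguments.

Lemma hc_edge_gt nc m i j : (1 < nc)%N -> hc_edge nc m i j -> (i < j)%N.
Proof. by rewrite /hc_edge => H /orP [/andP [/eqP -> _]| /and3P [/eqP -> _ _]]; lia. Qed.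

Lemma hc_adj_irr nc m i : (1 < nc)%N -> hc_adj nc m i i = false.
Proof.
move=> H; rewrite /hc_adj; apply/negP => /orP [] /(@hc_edge_gt _ _ _ _ H); lia.
Qed.

Lemma hc_adj_sym nc m i j : hc_adj nc m i j = hc_adj nc m j i.
Proof. by rewrite /hc_adj orbC. Qed.

Lemma hc_edge_path nc m k : (k < hcN nc m)%N -> hc_edge nc m k k.+1.
Proof. by move=> H; rewrite /hc_edge eqxx H. Qed.

Lemma stable_C1 (R : realType) nc m (c : R) th :
  (5 <= nc)%N -> 0 < c -> C1 nc m th -> stable_mod_rot nc m c th.
Proof.
move=> Hnc Hc H1.
pose W := fun i j : 'I_(hcN nc m).+1 => coupling nc m c i j * cos (th j - th i).
have cosE : forall i j : 'I_(hcN nc m).+1, hc_edge nc m i j -> 0 < cos (th j - th i).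
  move=> i j /H1 [k [Hk Hm]].
  rewrite -cosN opprB (eqmod_cos Hm); exact: cos_pos.
have Wii : forall i, W i i = 0 by move=> i; rewrite /W /coupling hc_adj_irr ?mul0r //; lia.
have Wsym : forall i j, W i j = W j i.
  by move=> i j; rewrite /W /coupling hc_adj_sym -cosN opprB.
have Wpos : forall i j : 'I_(hcN nc m).+1, hc_adj nc m i j -> 0 < W i j.
  move=> i j; rewrite /W /coupling => Ha; rewrite Ha; apply: mulr_gt0 => //.
  case/orP: Ha => [/cosE //|/cosE]; by rewrite -cosN opprB.
have Wge0 : forall i j : 'I_(hcN nc m).+1, 0 <= W i j.
  move=> i j; case Ha: (hc_adj nc m i j); first by apply: ltW; apply: Wpos.
  by rewrite /W /coupling Ha mul0r.
have Wpath : forall k : nat, (k < hcN nc m)%N -> 0 < W (inord k) (inord k.+1).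
  move=> k Hk; apply: Wpos; rewrite /hc_adj !inordK ?hc_edge_path //; lia.
rewrite /stable_mod_rot /=.
have -> : kuramoto_jac nc m c th = @lapJ _ _ W by [].
split.
- by apply: lapJ_sum0.
- by apply: lapJ_mup.
- by move=> a; apply: lapJ_eig.
Qed.


Set Implicit Arguments.

Lemma sum_pick (R : realType) N (t : nat) (P : bool) (F : nat -> R) :
  (P -> t < N)%N ->
  \sum_(j < N) (if ((j : nat) == t) && P then F j else 0) = if P then F t else 0.
Proof.
case: P => [/(_ isT) Ht|_]; last by rewrite big1 // => j _; rewrite andbF.
rewrite (bigD1 (Ordinal Ht)) //= eqxx big1 ?addr0 // => j.
by rewrite -val_eqE /= andbT => /negbTE ->.
Qed.

Ltac decide_nat :=
  repeat match goal with
  | |- context [(?b1 && ?b2)] =>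
     rewrite (_ : (b1 && b2) = false); [|by apply/negP; lia]
  | |- context [(?x == ?y)%N] =>
     first [ rewrite (_ : (x == y)%N = true); [|by apply/eqP; lia]
           | rewrite (_ : (x == y)%N = false); [|by apply/eqP; lia] ]
  | |- context [(?x <= ?y)%N] =>
     first [ rewrite (_ : (x <= y)%N = true); [|by lia]
           | rewrite (_ : (x <= y)%N = false); [|by lia] ]
  end.

Ltac simpl_nat := decide_nat; rewrite /= ?andbF ?andbT ?orbF ?andFb ?orFb /=;
  decide_nat; rewrite /= ?andbF ?andbT ?orbF ?andFb ?orFb /=.

Ltac fin_if := rewrite ?(mul0r, mulr0, add0r, addr0);
  try (case: ifP => _ /=; rewrite ?(mul0r, mulr0, add0r, addr0)).

Section Adj.
Variable R : realType.
Variables nc m : nat.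
Hypothesis Hnc : (5 <= nc)%N.

Lemma adj_split (F : nat -> R) (c : R) (i j : nat) : (i <= hcN nc m)%N ->
  (if hc_adj nc m i j then c else 0) * F j =
  c * ((if ((j == i.+1) && (i < hcN nc m))%N then F j else 0)
     + (if ((j == i + (nc - 1)) && ((i %% (nc - 1) == 0) && (i < hcN nc m)))%N then F j else 0)
     + (if ((j == i.-1) && (0 < i))%N then F j else 0)
     + (if ((j == i - (nc - 1)) && ((nc - 1 <= i) && ((i - (nc - 1)) %% (nc - 1) == 0)))%N
        then F j else 0)).
Proof.
move=> Hi; rewrite /hc_adj /hc_edge; rewrite /hcN in Hi *.
case: (j =P i.+1) => [Ej|n1]; first subst j.
  simpl_nat.
  by fin_if.
case: (j =P (i + (nc - 1))%N) => [Ej|n2]; first subst j.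
  simpl_nat.
  by fin_if.
case: (j =P i.-1) => [Ej|n3]; first subst j.
  by case: (posnP i) => [->|Hi0]; simpl_nat; fin_if.
case: (j =P (i - (nc - 1))%N) => [Ej|n4]; first subst j.
  by case: (leqP (nc - 1) i) => Hd; simpl_nat; fin_if.
simpl_nat.
by rewrite ?(mul0r, mulr0, add0r, addr0).
Qed.
End Adj.

Lemma modn_subd (d i : nat) : (d <= i)%N -> ((i - d) %% d = i %% d)%N.
Proof. by move=> H; rewrite -{2}(subnK H) modnDr. Qed.

Lemma divn_range (d p u : nat) : (4 <= d)%N -> (p * d <= u < p * d + d)%N -> (u %/ d = p)%N.
Proof. nia. Qed.

Lemma modn0_eq (d i : nat) : (4 <= d)%N -> (i %% d == 0)%N -> i = (i %/ d * d)%N.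
Proof. nia. Qed.

Section Rep.
Variable R : realType.
Variables nc m : nat.
Hypothesis Hnc : (5 <= nc)%N.

Definition dl (kk : nat -> int) (p : nat) : R := 2 * pi * (kk p)%:~R / nc%:R.
Definition repk (kk : nat -> int) (v : nat) : R :=
  - \sum_(0 <= u < v) dl kk (u %/ (nc - 1)).

Lemma repk_S kk u : repk kk u.+1 = repk kk u - dl kk (u %/ (nc - 1)).
Proof. by rewrite /repk big_nat_recr //= opprD. Qed.

Lemma repk_chord kk p :
  repk kk (p * (nc - 1) + (nc - 1)) = repk kk (p * (nc - 1)) - (nc - 1)%:R * dl kk p.
Proof.
rewrite /repk (big_cat_nat _ (leq_addr _ _)) //= opprD; congr (_ - _).
rewrite (eq_big_nat _ _ (F2 := fun _ => dl kk p)); last first.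
  by move=> u Hu; rewrite (@divn_range (nc - 1) p u) //; lia.
by rewrite sumr_const_nat addKn mulr_natl.
Qed.

Lemma d_dl kk p : (nc - 1)%:R * dl kk p = 2 * pi * (kk p)%:~R - dl kk p.
Proof.
rewrite /dl natrB; last by lia.
have hnc : (nc%:R : R) != 0 by rewrite pnatr_eq0; lia.
by field.
Qed.

Lemma sum_adj (F : nat -> R) (c : R) (i : 'I_(hcN nc m).+1) :
  \sum_j coupling nc m c i j * F j =
  c * ((if (i < hcN nc m)%N then F i.+1 else 0)
     + (if ((i %% (nc - 1) == 0) && (i < hcN nc m))%N then F (i + (nc - 1))%N else 0)
     + (if (0 < i)%N then F i.-1 else 0)
     + (if ((nc - 1 <= i) && ((i - (nc - 1)) %% (nc - 1) == 0))%N
        then F (i - (nc - 1))%N else 0)).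
Proof.
have Hi : (i <= hcN nc m)%N by rewrite -ltnS.
rewrite /coupling.
under eq_bigr => j _ do rewrite (@adj_split R nc m Hnc F c i j Hi).
rewrite -mulr_sumr !big_split /= !sum_pick //; try lia.
move=> /andP [/eqP H1 H2]; rewrite /hcN in H2 *.
have Hd : (4 <= nc - 1)%N by lia.
have E := @modn0_eq _ _ Hd (introT eqP H1).
set q := (i %/ (nc - 1))%N in E.
have : (q < m)%N by rewrite E in H2; rewrite -(ltn_pmul2r (n1 := q) (_ : 0 < nc - 1)%N) //; lia.
rewrite E; nia.
Qed.

Lemma phase_rep kk (c : R) (i : 'I_(hcN nc m).+1) :
  \sum_j coupling nc m c i j * sin (repk kk j - repk kk i) = 0.
Proof.
rewrite (sum_adj (fun j => sin (repk kk j - repk kk i))).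
rewrite -[RHS](mulr0 c); congr (_ * _).
have Hi : (i <= hcN nc m)%N by rewrite -ltnS.
move: (nat_of_ord i) Hi => {}i Hi.
have Hd : (4 <= nc - 1)%N by lia.
set d := (nc - 1)%N in Hd *.
have FA : sin (repk kk i.+1 - repk kk i) = - sin (dl kk (i %/ d)).
  by rewrite repk_S addrAC subrr add0r sinN.
have FC : (0 < i)%N -> sin (repk kk i.-1 - repk kk i) = sin (dl kk (i.-1 %/ d)).
  move=> H0; rewrite -{2}(prednK H0) repk_S.
  by congr sin; rewrite opprB addrC subrK.
have FB : (i %% d == 0)%N -> sin (repk kk (i + d) - repk kk i) = sin (dl kk (i %/ d)).
  move=> H; have Ei := @modn0_eq _ _ Hd H.
  set p := (i %/ d)%N in Ei *.
  rewrite [in LHS]Ei repk_chord d_dl.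
  transitivity (sin (dl kk p + 2 * pi * (- kk p)%:~R)); last exact: sin_addz.
  by congr sin; rewrite intrN; ring.
have FD : (d <= i)%N -> ((i - d) %% d == 0)%N ->
    sin (repk kk (i - d) - repk kk i) = - sin (dl kk ((i - d) %/ d)).
  move=> H1 H2; have E1 := @modn0_eq _ _ Hd H2.
  set q := ((i - d) %/ d)%N in E1 *.
  have E2 : i = (q * d + d)%N by lia.
  rewrite [in LHS]E1 [in LHS]E2 repk_chord d_dl.
  transitivity (sin (- dl kk q + 2 * pi * (kk q)%:~R)); last by rewrite sin_addz sinN.
  by congr sin; ring.
have Hsub := @modn_subd d i.
case: (eqVneq (i %% d)%N 0%N) => Hm.
  have ED : ((d <= i) && ((i - d) %% d == 0))%N = (0 < i)%N.
    case: (leqP d i) => H /=; first by rewrite Hsub // Hm eqxx; lia.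
    by move: Hm; rewrite modn_small // => ->.
  rewrite ED /= FA (FB (introT eqP Hm)).
  case: (posnP i) => [Ei0|Hp].
    by rewrite Ei0 /=; case: ifP => _; lra.
  have Hdi : (d <= i)%N by move: ED; rewrite Hp => /andP [].
  have Hmi : ((i - d) %% d == 0)%N by move: ED; rewrite Hp => /andP [].
  rewrite (FC Hp) (FD Hdi Hmi).
  have -> : (i.-1 %/ d = (i - d) %/ d)%N.
    have E1 := @modn0_eq _ _ Hd Hmi.
    by apply: divn_range => //; lia.
  by case: ifP => _; lra.
have HA : (i < hcN nc m)%N.
  rewrite ltn_neqAle Hi andbT; apply/eqP => E; move: Hm.
  by rewrite E /hcN modnMl eqxx.
have Hp : (0 < i)%N by rewrite lt0n; apply/eqP => E; move: Hm; rewrite E mod0n eqxx.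
have ED : ((d <= i) && ((i - d) %% d == 0))%N = false.
  by case: (leqP d i) => H //=; rewrite Hsub // (negbTE Hm).
rewrite ED HA Hp /= FA (FC Hp).
have -> : (i.-1 %/ d = i %/ d)%N.
  have E := divn_eq i d.
  apply: divn_range => //.
  have : (0 < i %% d)%N by rewrite lt0n.
  have : (i %% d < d)%N by rewrite ltn_mod; lia.
  lia.
lra.
Qed.

End Rep.


Set Implicit Arguments.

Definition digit (b s p : nat) : nat := ((s %/ b ^ p) %% b)%N.

Fixpoint enc (b : nat) (dd : nat -> nat) (n : nat) : nat :=
  if n is n'.+1 then (dd 0 + b * enc b (fun p => dd p.+1) n')%N else 0%N.

Lemma enc_lt b dd n : (forall p, p < n -> dd p < b)%N -> (enc b dd n < b ^ n)%N.
Proof.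
elim: n dd => [|n IH] dd H /=; first by [].
have h0 := H 0%N isT.
have h1 : (enc b (fun p => dd p.+1) n < b ^ n)%N by apply: IH => p Hp; apply: H.
rewrite expnS; nia.
Qed.

Lemma enc_digit b dd n : (forall p, p < n -> dd p < b)%N ->
  forall p, (p < n)%N -> digit b (enc b dd n) p = dd p.
Proof.
elim: n dd => [|n IH] dd H p Hp //=.
have h0 := H 0%N isT.
have hb : (0 < b)%N by lia.
case: p Hp => [|p] Hp.
  by rewrite /digit expn0 divn1 addnC mulnC modnMDl modn_small.
rewrite /digit expnS divnMA (addnC (dd 0%N)) (mulnC b) divnMDl // (divn_small h0) addn0.
by apply: (IH (fun p => dd p.+1)) => // q Hq; apply: H.
Qed.

Lemma digits_inj b n s t : (s < b ^ n)%N -> (t < b ^ n)%N ->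
  (forall p, p < n -> digit b s p = digit b t p)%N -> s = t.
Proof.
elim: n s t => [|n IH] s t Hs Ht H.
  by move: Hs Ht; rewrite expn0; lia.
have hb : (0 < b)%N by move: Hs; case: (b) => //; rewrite exp0n.
have H0 := H 0%N isT; rewrite /digit expn0 !divn1 in H0.
have Hq : (s %/ b = t %/ b)%N.
  apply: IH.
  - by rewrite ltn_divLR // mulnC -expnS.
  - by rewrite ltn_divLR // mulnC -expnS.
  - move=> p Hp; have := H p.+1 Hp; rewrite /digit expnS !divnMA; apply.
by rewrite (divn_eq s b) (divn_eq t b) Hq H0.
Qed.

Lemma fin_choice (P : nat -> int -> Prop) n :
  (forall p, (p < n)%N -> exists k, P p k) -> exists f, forall p, (p < n)%N -> P p (f p).
Proof.
elim: n => [|n IH] H; first by exists (fun _ => 0) => p.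
have [f Hf] : exists f, forall p, (p < n)%N -> P p (f p).
  by apply: IH => p Hp; apply: H; lia.
have [k Hk] := H n (ltnSn n).
exists (fun p => if p == n then k else f p) => p Hp.
by case: eqP => [->|ne] //; apply: Hf; lia.
Qed.

Section Count.
Variable R : realType.
Variables nc m : nat.
Hypothesis Hnc : (5 <= nc)%N.

Local Notation d := (nc - 1)%N.
Local Notation N := (hcN nc m).

Lemma C1_repk (kk : nat -> int) : (forall p, absz (kk p) <= ceil4 nc - 1)%N ->
  C1 nc m (fun i : 'I_N.+1 => repk R nc kk i).
Proof.
move=> Hk i j; rewrite /hc_edge => /orP [/andP [/eqP Ej Hi] | /and3P [/eqP Ej Hm Hi]].
  exists (kk (i %/ d)%N); split; first exact: Hk.
  rewrite Ej repk_S opprB addrC subrK; exact: eqmod_refl.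
have Hd : (4 <= d)%N by lia.
have Ei := @modn0_eq _ _ Hd Hm.
set p := (i %/ d)%N in Ei.
exists (- kk p); split; first by rewrite abszN; exact: Hk.
rewrite Ej Ei (repk_chord _ _ Hnc) (d_dl _ _ Hnc).
exists (kk p); rewrite /dl intrN; ring.
Qed.

Lemma C2_repk (kk : nat -> int) : C2 nc m (fun i : 'I_N.+1 => repk R nc kk i).
Proof.
move=> p i j Hp Hi Hj.
have HN : (p.+1 * d <= N)%N by rewrite /hcN leq_mul2r Hp orbT.
have Hd : (4 <= d)%N by lia.
rewrite !inordK; try lia.
rewrite !repk_S !subKr.
rewrite (@divn_range d p i) // ?(@divn_range d p j) //; last by rewrite -mulSnr; lia.
  exact: eqmod_refl.
by rewrite -mulSnr; lia.
Qed.

Definition bb := (2 * ceil4 nc - 1)%N.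
Definition kz (s : nat) : nat -> int := fun p => (digit bb s p)%:Z - (ceil4 nc - 1)%:Z.

Lemma kz_bound s p : (absz (kz s p) <= ceil4 nc - 1)%N.
Proof.
have : (digit bb s p < bb)%N by rewrite /digit ltn_mod /bb /ceil4; lia.
rewrite /kz /bb; lia.
Qed.

Definition reps (s : 'I_(bb ^ m)) : 'I_N.+1 -> R := fun i => repk R nc (kz s) i.

Lemma reps_inj s t : rot_equiv (reps s) (reps t) -> s = t.
Proof.
move=> [r Hr]; apply: val_inj; apply: (@digits_inj bb m _ _ (ltn_ord s) (ltn_ord t)) => p Hp.
have Hd : (4 <= d)%N by lia.
have Ha : (p * d < N)%N by rewrite /hcN ltn_mul2r Hp; lia.
have H1 := Hr (inord (p * d)); have H2 := Hr (inord (p * d).+1).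
have := eqmod_sub H1 H2.
rewrite /reps !inordK; try lia.
rewrite !repk_S (@divn_range d p) //; last by lia.
have -> : repk R nc (kz t) (p * d) + r - (repk R nc (kz t) (p * d) - dl R nc (kz t) p + r)
   = dl R nc (kz t) p by ring.
rewrite opprB addrC subrK => [[l Hl]].
have hnc : (nc%:R : R) != 0 by rewrite pnatr_eq0; lia.
have hpi : (2 * pi / nc%:R : R) != 0.
  by rewrite mulf_neq0 ?invr_eq0 // mulf_neq0 // ?pnatr_eq0 // gt_eqF // pi_gt0.
have : ((kz s p - kz t p)%:~R : R) = ((l * nc%:Z)%:~R).
  apply: (mulfI hpi).
  transitivity (dl R nc (kz s) p - dl R nc (kz t) p); first by rewrite /dl intrB; ring.
  rewrite Hl intrM; rewrite -[(nc%:Z)%:~R]/(nc%:R : R). by field.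
move/eqP; rewrite eqr_int => /eqP Hkl.
have Hs := kz_bound s p; have Ht := kz_bound t p.
have l0 : l = 0 by rewrite /ceil4 in Hs Ht; nia.
move: Hkl; rewrite l0 mul0r => /eqP; rewrite subr_eq0 /kz => /eqP.
lia.
Qed.

Lemma reps_surj th : C1 nc m th -> C2 nc m th -> exists s, rot_equiv th (reps s).
Proof.
move=> H1 H2.
have Hd : (4 <= d)%N by lia.
have Hex : forall p, (p < m)%N -> exists k : int, (absz k <= ceil4 nc - 1)%N /\
    eqmod2pi (th (inord (p * d)) - th (inord (p * d).+1)) (2 * pi * k%:~R / nc%:R).
  move=> p Hp; apply: H1.
  have Ha : (p * d < N)%N by rewrite /hcN ltn_mul2r Hp; lia.
  rewrite /hc_edge !inordK ?eqxx /=; try lia.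
  by apply/orP; left; rewrite -/(hcN nc m) Ha.
have [f Hf] := fin_choice _ _ Hex.
pose dd p := absz (f p + (ceil4 nc - 1)%:Z).
have Hdd : forall p, (p < m)%N -> (dd p < bb)%N.
  by move=> p Hp; have [Hb _] := Hf p Hp; rewrite /dd /bb /ceil4 in Hb *; lia.
set s0 := enc bb dd m.
have Hs0 : (s0 < bb ^ m)%N := @enc_lt _ _ _ Hdd.
exists (Ordinal Hs0).
have Hkz : forall p, (p < m)%N -> kz s0 p = f p.
  move=> p Hp; rewrite /kz (@enc_digit _ _ _ Hdd _ Hp) /dd; have [Hb _] := Hf p Hp.
  rewrite /ceil4 in Hb *; lia.
exists (th ord0).
suff Hv : forall v, (v <= N)%N -> eqmod2pi (th (inord v)) (repk R nc (kz s0) v + th ord0).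
  by move=> i; rewrite /reps /=; have := Hv i; rewrite inord_val; apply; rewrite -ltnS.
elim=> [|v IH] Hv.
  rewrite /repk big_nil oppr0 add0r (_ : inord 0 = ord0); first exact: eqmod_refl.
  by apply: val_inj; rewrite /= inordK.
have IH' := IH (ltnW Hv).
set p := (v %/ d)%N.
have Hp : (p < m)%N by rewrite /p ltn_divLR; [rewrite /hcN in Hv; lia | lia].
have Hrange : (p * d <= v < p.+1 * d)%N.
  by rewrite /p leq_trunc_div /= ltn_ceil //; lia.
have Hrange2 : (p * d <= p * d < p.+1 * d)%N by rewrite leqnn /= mulSn; lia.
have C2v := H2 p v (p * d)%N Hp Hrange Hrange2.
have [_ C1p] := Hf p Hp.
rewrite repk_S -/p.
rewrite -(subKr (th (inord v)) (th (inord v.+1))).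
rewrite addrAC; apply: eqmod_sub IH' _.
apply: eqmod_trans C2v _.
by rewrite /dl Hkz.
Qed.

End Count.

Lemma phase_transfer (R : realType) nc m (c : R) (th th' : 'I_(hcN nc m).+1 -> R) i :
  rot_equiv th th' ->
  \sum_j coupling nc m c i j * sin (th j - th i) =
  \sum_j coupling nc m c i j * sin (th' j - th' i).
Proof.
move=> [r Hr]; apply: eq_bigr => j _; congr (_ * _); apply: eqmod_sin.
have := eqmod_sub (Hr j) (Hr i).
by rewrite (_ : th' j + r - (th' i + r) = th' j - th' i) //; ring.
Qed.

Theorem theorem3p1 (R : realType) (m nc : nat) (c : R)
    (w : 'I_((hcN nc m).+1) -> R) :
  (1 <= m)%N -> (5 <= nc)%N -> 0 < c -> (forall i j, w i = w j) ->
  (exists reps : 'I_((2 * ceil4 nc - 1) ^ m) -> ('I_((hcN nc m).+1) -> R),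
      (forall s, C1 nc m (reps s) /\ C2 nc m (reps s))
   /\ (forall s t, rot_equiv (reps s) (reps t) -> s = t)
   /\ (forall th, C1 nc m th -> C2 nc m th -> exists s, rot_equiv th (reps s)))
  /\ (forall th : 'I_((hcN nc m).+1) -> R, C1 nc m th -> C2 nc m th ->
        phase_locked nc m c w th /\ stable_mod_rot nc m c th).
Proof.
move=> Hm Hnc Hc Hw.
split.
  exists (@reps R nc m); split; [|split].
  - move=> s; split; first by apply: C1_repk => // p; apply: kz_bound.
    exact: C2_repk.
  - by move=> s t; apply: reps_inj.
  - by move=> th; apply: reps_surj.
move=> th H1 H2; split; last exact: stable_C1.
have [s Hs] := reps_surj Hnc H1 H2.
exists (w ord0) => i.
rewrite /kuramoto_rhs (@phase_transfer R nc m c th (reps R nc m s) i Hs) /reps.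
by rewrite (@phase_rep R nc m Hnc (kz nc s) c i) addr0 (Hw i ord0).
Qed.
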